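(* Let $L\ge 2$, let $f\in C^2(\mathbb{R}^n,\mathbb{R})$ with $\nabla_x f(0)\neq 0$, and define $F(w_1,\dots,w_L):=f\left(\prod_{i=1}^L w_i\right)$ for $w_1,\dots,w_L\in\mathbb{R}^n$ (entrywise product). Let $$S:=\{(w_1,\dots,w_L): \text{there exist } i\neq j \text{ in } [L] \text{ with } w_i=w_j=0,\ \text{and } w_k \text{ has all entries nonzero for every } k\notin\{i,j\}\}.$$ Then every point of $S$ is a saddle point of $F$.
   Context: A saddle point of a function $F\in C^2$ is a point where $\nabla F=0$ and the Hessian $\nabla^2 F$ is not positive semidefinite. The map $x=g(w)=\prod_{i=1}^L w_i$ is the deep diagonal reparameterization. *)

(* Defs.v *)
From HB Require Import structures.
From mathcomp Require Import all_boot all_order all_algebra.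
From mathcomp Require Import all_classical all_reals all_analysis.
Set Implicit Arguments. Unset Strict Implicit. Unset Printing Implicit Defensive.
Import Order.TTheory GRing.Theory Num.Theory.
Import numFieldNormedType.Exports.
Local Open Scope ring_scope.

(* A vector in R^n is a 1 x n row matrix; an L-tuple
   (w_1,...,w_L) of vectors of R^n is the L x n matrix whose k-th row is w_k. *)

Section Defs.
Variable R : realType.

Definition partial {m n : nat} (f : 'M[R]_(m, n) -> R) (a : 'I_m * 'I_n)
  (x : 'M[R]_(m, n)) : R := derive f x (delta_mx a.1 a.2).

Definition has_partial {m n : nat} (f : 'M[R]_(m, n) -> R) (a : 'I_m * 'I_n)
  (x : 'M[R]_(m, n)) : Prop := derivable f x (delta_mx a.1 a.2).

Definition C2 {m n : nat} (f : 'M[R]_(m, n) -> R) : Prop :=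
  continuous f /\
  (forall a x, has_partial f a x) /\
  (forall a, continuous (partial f a)) /\
  (forall a b x, has_partial (partial f a) b x) /\
  (forall a b, continuous (partial (partial f a) b)).

Definition grad {m n : nat} (f : 'M[R]_(m, n) -> R) (x : 'M[R]_(m, n))
  : 'M[R]_(m, n) := \matrix_(i, j) partial f (i, j) x.

Definition hessian {m n : nat} (f : 'M[R]_(m, n) -> R) (x : 'M[R]_(m, n))
  (a b : 'I_m * 'I_n) : R := partial (partial f a) b x.

Definition psd {I : finType} (H : I -> I -> R) : Prop :=
  forall v : I -> R, 0 <= \sum_(a : I) \sum_(b : I) v a * H a b * v b.

Definition saddle_point {m n : nat} (F : 'M[R]_(m, n) -> R) (x : 'M[R]_(m, n))
  : Prop := C2 F /\ grad F x = 0 /\ ~ psd (hessian F x).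

Definition diag_prod {L n : nat} (W : 'M[R]_(L, n)) : 'M[R]_(1, n) :=
  \row_j \prod_(k < L) W k j.

Definition S_set {L n : nat} (W : 'M[R]_(L, n)) : Prop :=
  exists i j : 'I_L, i != j /\ row i W = 0 /\ row j W = 0 /\
    forall k : 'I_L, k != i -> k != j -> forall l : 'I_n, W k l != 0.

End Defs.

(* Main.v *)
Require Import Defs.
From HB Require Import structures.
From mathcomp Require Import all_boot all_order all_algebra.
From mathcomp Require Import all_classical all_reals all_analysis.
From mathcomp Require Import lra.
Import Order.TTheory GRing.Theory Num.Theory.
Import numFieldNormedType.Exports.
Local Open Scope ring_scope.

Local Open Scope classical_set_scope.
Section S.
Variable R : realType.

Lemma mul_dnbhs (c : R) : c != 0 -> (fun h : R => c * h) @ (0:R)^' --> (0:R)^'.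
Proof.
move=> c0 A /= HA.
have hc : (fun h : R => c * h) @ (0:R) --> (0:R).
  rewrite -[X in _ --> X](mulr0 c); apply: cvgMr; exact: cvg_id.

move: (hc _ HA) => H.
change (\forall h \near (0:R), h != 0 -> A (c * h)).
have H' : \forall h \near (0:R), c * h != 0 -> A (c * h) := H.
move: H'; apply: filterS => h /= Hh hn0; apply: Hh.
by rewrite mulf_neq0.
Qed.

Lemma mx_cont (T : topologicalType) m n (h : T -> 'M[R]_(m, n)) :
  (forall i j, continuous (fun x => h x i j)) -> continuous h.
Proof.
move=> hc x; apply/cvg_mx_entourageP => A entA.
apply: filter_forall => i; apply: filter_forall => j.
have := hc i j x; move/cvg_app_entourageP/(_ A entA).
by apply: filterS => y Hy; rewrite /= inE.
Qed.

Lemma derive_transfer (V1 V2 : normedModType R) (F1 : V1 -> R) (F2 : V2 -> R)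
  x1 v1 x2 v2 :
  (forall h : R, F1 (h *: v1 + x1) - F1 x1 = F2 (h *: v2 + x2) - F2 x2) ->
  (derivable F1 x1 v1 <-> derivable F2 x2 v2) /\ derive F1 x1 v1 = derive F2 x2 v2.
Proof.
move=> H.
have E : (fun h : R => h^-1 *: ((F1 \o shift x1) (h *: v1) - F1 x1)) =
         (fun h : R => h^-1 *: ((F2 \o shift x2) (h *: v2) - F2 x2)).
  by apply/funext => h /=; rewrite H.
by rewrite /derivable /derive E.
Qed.

Lemma derive_scale (V1 : normedModType R) (f : V1 -> R) x v (c : R) :
  derivable f x v -> derivable f x (c *: v) /\ derive f x (c *: v) = c * derive f x v.
Proof.
move=> df.
have [->|c0] := eqVneq c 0.
  by rewrite scale0r mul0r; split; [exact: derivable0 | exact: derive0].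
set q := (fun h : R => h^-1 *: ((f \o shift x) (h *: v) - f x)).
have E : (fun h : R => h^-1 *: ((f \o shift x) (h *: (c *: v)) - f x)) =
         (fun h => c * q (c * h)).
  apply/funext => h; rewrite /q /= scalerA [h * c]mulrC.
  change (h^-1 * (f ((c*h) *: v + x) - f x) = c * ((c*h)^-1 * (f ((c * h) *: v + x) - f x))).
  by rewrite invfM !mulrA mulfV // mul1r.
have L : (fun h => c * q (c * h)) @ (0:R)^' --> c * derive f x v.
  apply: cvgMr.
  apply: cvg_comp; first exact: mul_dnbhs.
  exact: df.
split; first by rewrite /derivable E; apply/cvg_ex; eexists; exact: L.
by rewrite /derive E; apply: cvg_lim.
Qed.
End S.

Section Main.
Variable R : realType.

Lemma cont_mul (T : topologicalType) (s t : T -> R) :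
  continuous s -> continuous t -> continuous (fun x => s x * t x).
Proof. move=> hs ht x; exact: (continuousM (hs x) (ht x)). Qed.

Lemma cont_add (T : topologicalType) (s t : T -> R) :
  continuous s -> continuous t -> continuous (fun x => s x + t x).
Proof. move=> hs ht x; exact: (continuousD (hs x) (ht x)). Qed.

Lemma cont_prod (T : topologicalType) (I : Type) (s : seq I) (P : pred I)
  (F : I -> T -> R) :
  (forall i, continuous (F i)) -> continuous (fun x => \prod_(i <- s | P i) F i x).
Proof.
move=> hF; elim: s => [|a s IH].
  under eq_fun do rewrite big_nil. exact: cst_continuous.
under eq_fun do rewrite big_cons.
case: (P a).
  exact: cont_mul.
exact: IH.
Qed.

Variables (L n : nat).
Implicit Types (V : 'M[R]_(L, n)).

Definition cf (a : 'I_L * 'I_n) V : R := \prod_(m < L | m != a.1) V m a.2.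
Definition dcf (a b : 'I_L * 'I_n) V : R :=
  if (b.2 == a.2) && (b.1 != a.1) then
    \prod_(m < L | (m != a.1) && (m != b.1)) V m a.2 else 0.

Lemma PL (P : pred 'I_L) (k : 'I_L) (l : 'I_n) (h : R) V :
  \prod_(m | P m) (h * (m == k)%:R + V m l) =
  \prod_(m | P m) V m l + (if P k then h * \prod_(m | P m && (m != k)) V m l else 0).
Proof.
case: ifP => Pk.
  rewrite (bigD1 k) //= [in RHS](bigD1 k) //= eqxx mulr1.
  rewrite (eq_bigr (fun m => V m l)); last first.
    by move=> m /andP[_ mk]; rewrite (negbTE mk) mulr0 add0r.
  by rewrite mulrDl addrC.
rewrite addr0; apply: eq_bigr => m Pm.
have -> : (m == k) = false by apply/eqP => km; rewrite -km Pm in Pk.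
by rewrite mulr0 add0r.
Qed.

Lemma g_shift b V (h : R) :
  diag_prod (h *: delta_mx b.1 b.2 + V) =
  h *: (cf b V *: delta_mx ord0 b.2) + diag_prod V.
Proof.
apply/matrixP => i j; rewrite !mxE (ord1 i) eqxx /=.
under eq_bigr do rewrite !mxE.
have [bj|bj] := eqVneq b.2 j.
  under eq_bigr do rewrite andbT.
  rewrite (PL predT) /= /cf bj mulr1.
  by rewrite addrC.
under eq_bigr do rewrite andbF mulr0 add0r.
by rewrite mulr0 mulr0 add0r.
Qed.

Lemma cf_shift a b V (h : R) :
  cf a (h *: delta_mx b.1 b.2 + V) = cf a V + h * dcf a b V.
Proof.
rewrite /cf /dcf.
under eq_bigr do rewrite !mxE.
have [ba|ba] := eqVneq b.2 a.2.
  under eq_bigr do rewrite andbT.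
  rewrite (PL (fun m => m != a.1) b.1 a.2 h V) /=.
  by case: ifP => _; rewrite ?mulr0.
under eq_bigr do rewrite andbF mulr0 add0r.
by rewrite /= mulr0 addr0.
Qed.

Lemma cf_cont a : continuous (cf a).
Proof.
rewrite /cf; apply: (@cont_prod _ _ _ _ (fun m V => V m a.2)) => m.
exact: coord_continuous.
Qed.

Lemma dcf_cont a b : continuous (dcf a b).
Proof.
rewrite /dcf; case: ((b.2 == a.2) && (b.1 != a.1)); last exact: cst_continuous.
apply: (@cont_prod _ _ _ _ (fun m V => V m a.2)) => m.
exact: coord_continuous.
Qed.

Lemma g_cont : continuous (@diag_prod R L n).
Proof.
apply: mx_cont => i j.
under eq_fun do rewrite mxE.
apply: (@cont_prod _ _ _ _ (fun m V => V m j)) => m.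
exact: coord_continuous.
Qed.

Lemma dcfL a b V : derivable (cf a) V (delta_mx b.1 b.2) /\
  derive (cf a) V (delta_mx b.1 b.2) = dcf a b V.
Proof.
have [E1 E2] := @derive_transfer _ _ R (cf a) (fun y : R => y) V (delta_mx b.1 b.2)
   0 (dcf a b V) (fun h => ltac:(rewrite cf_shift addr0 subr0; rewrite addrC addKr; reflexivity)).
split; first by apply/E1; exact: derivable_id.
by rewrite E2; exact: (@derive_id R R^o).
Qed.


Variable f : 'M[R]_(1, n) -> R.
Hypothesis Hf : C2 f.

Definition Fg V := f (diag_prod V).
Definition pf (l : 'I_n) := partial f (ord0, l).
Definition ppf (l l' : 'I_n) := partial (pf l) (ord0, l').

Lemma dF b V : has_partial Fg b V /\ partial Fg b V = cf b V * pf b.2 (diag_prod V).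
Proof.
have [E1 E2] := @derive_transfer _ _ _ Fg f V (delta_mx b.1 b.2)
   (diag_prod V) (cf b V *: delta_mx ord0 b.2)
   (fun h => ltac:(rewrite /Fg g_shift; reflexivity)).
have df : derivable f (diag_prod V) (delta_mx ord0 b.2).
  by have := Hf.2.1 (ord0, b.2) (diag_prod V).
have [D1 D2] := @derive_scale _ _ _ _ _ (cf b V) df.
split; first by rewrite /has_partial; apply/E1.
by rewrite /partial E2 D2.
Qed.

Lemma dPG l b V : derivable (fun V => pf l (diag_prod V)) V (delta_mx b.1 b.2) /\
  derive (fun V => pf l (diag_prod V)) V (delta_mx b.1 b.2)
  = cf b V * ppf l b.2 (diag_prod V).
Proof.
have [E1 E2] := @derive_transfer _ _ _ (fun V => pf l (diag_prod V)) (pf l) V (delta_mx b.1 b.2)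
   (diag_prod V) (cf b V *: delta_mx ord0 b.2)
   (fun h => ltac:(rewrite /= g_shift; reflexivity)).
have df : derivable (pf l) (diag_prod V) (delta_mx ord0 b.2).
  by have := Hf.2.2.2.1 (ord0, l) (ord0, b.2) (diag_prod V).
have [D1 D2] := @derive_scale _ _ _ _ _ (cf b V) df.
split; first by apply/E1.
by rewrite E2 D2.
Qed.

Lemma pFE a : partial Fg a = fun V => cf a V * pf a.2 (diag_prod V).
Proof. by apply/funext => V; case: (dF a V). Qed.

Lemma d2F a b V : has_partial (partial Fg a) b V /\
  partial (partial Fg a) b V =
  cf a V * (cf b V * ppf a.2 b.2 (diag_prod V)) + pf a.2 (diag_prod V) * dcf a b V.
Proof.
rewrite pFE /has_partial /partial.
have [c1 c2] := dcfL a b V.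
have [p1 p2] := dPG a.2 b V.
split; first exact: (derivableM c1 p1).
have := deriveM c1 p1. rewrite c2 p2. move=> <-. done.
Qed.


Lemma C2F : C2 Fg.
Proof.
split.
  move=> x; apply: continuous_comp; [exact: g_cont | exact: Hf.1].
split; first by move=> a x; case: (dF a x).
split.
  move=> a; rewrite pFE; apply: cont_mul; first exact: cf_cont.
  move=> x; apply: continuous_comp; [exact: g_cont | exact: Hf.2.2.1].
split; first by move=> a b x; case: (d2F a b x).
move=> a b.
have -> : partial (partial Fg a) b = fun V =>
  cf a V * (cf b V * ppf a.2 b.2 (diag_prod V)) + pf a.2 (diag_prod V) * dcf a b V.
  by apply/funext => V; case: (d2F a b V).
apply: cont_add; apply: cont_mul.
- exact: cf_cont.
- apply: cont_mul; first exact: cf_cont.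
  move=> x; apply: continuous_comp; [exact: g_cont | exact: Hf.2.2.2.2].
- move=> x; apply: continuous_comp; [exact: g_cont | exact: Hf.2.2.1].
- exact: dcf_cont.
Qed.

End Main.
Arguments Fg {R L n}. Arguments pf {R n}. Arguments dF {R L n f}. Arguments d2F {R L n f}. Arguments C2F {R L n f}. Arguments cf {R L n}. Arguments dcf {R L n}.

Lemma sum2 (R : realType) (I : finType) (x y : I) (u : I -> R) : x != y ->
  (forall z, z != x -> z != y -> u z = 0) -> \sum_z u z = u x + u y.
Proof.
move=> xy H; rewrite (bigD1 x) //= (bigD1 y) /=; last by rewrite eq_sym.
rewrite big1 ?addr0 // => z /andP[zx zy]; exact: H.
Qed.
Arguments sum2 {R I x y u}.

Local Close Scope classical_set_scope.

Theorem theorem2 (R : realType) (L n : nat) (f : 'M[R]_(1, n) -> R) :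
  (2 <= L)%N -> C2 f -> grad f 0 != 0 ->
  forall W : 'M[R]_(L, n), S_set W ->
    saddle_point (fun V : 'M[R]_(L, n) => f (diag_prod V)) W.
Proof.
move=> L2 Hf gne W [i [j [ij [Hi [Hj Hk]]]]].
change (saddle_point (Fg f) W).
have Wi : forall l, W i l = 0.
  by move=> l; have := congr1 (fun M : 'M[R]_(1, n) => M ord0 l) Hi; rewrite !mxE.
have Wj : forall l, W j l = 0.
  by move=> l; have := congr1 (fun M : 'M[R]_(1, n) => M ord0 l) Hj; rewrite !mxE.
have cf0 : forall a, cf a W = 0.
  move=> a; rewrite /cf; have [ai|ai] := eqVneq a.1 i.
    by rewrite (bigD1 j) /= ?Wj ?mul0r // ai eq_sym.
  by rewrite (bigD1 i) /= ?Wi ?mul0r // eq_sym.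
have g0 : diag_prod W = 0.
  by apply/matrixP => r l; rewrite !mxE (bigD1 i) //= Wi mul0r.
split; first exact: C2F Hf.
split.
  apply/matrixP => r l; rewrite !mxE.
  by rewrite (dF Hf (r, l) W).2 cf0 mul0r.
have Hess : forall a b, hessian (Fg f) W a b = pf f a.2 0 * dcf a b W.
  by move=> a b; rewrite /hessian (d2F Hf a b W).2 cf0 g0 mul0r add0r.
have [l Hl] : exists l, pf f l 0 != 0.
  apply/existsP; move: gne; apply: contraNN => /forallP H.
  apply/eqP/matrixP => r k; rewrite !mxE (ord1 r); exact/eqP/H.
set c := pf f l 0.
set p := \prod_(m < L | (m != i) && (m != j)) W m l.
have p0 : p != 0.
  rewrite /p; apply: (big_ind (fun x => x != 0)) => //.
    by move=> x y; apply: mulf_neq0.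
  by move=> m /andP[mi mj]; apply: Hk.
have cp0 : c * p != 0 by rewrite mulf_neq0.
move=> Hpsd.
pose v := fun a : 'I_L * 'I_n => if a == (i, l) then 1 else if a == (j, l) then -(c * p) else 0.
have := Hpsd v.
have xy : (i, l) != (j, l) by rewrite xpair_eqE negb_and ij.
have v0 : forall z, z != (i, l) -> z != (j, l) -> v z = 0.
  by move=> z zx zy; rewrite /v (negbTE zx) (negbTE zy).
set H := hessian (Fg f) W.
set x := (i, l). set y := (j, l).
have vx : v x = 1 by rewrite /v eqxx.
have vy : v y = - (c * p) by rewrite /v eq_sym (negbTE xy) eqxx.
have Hxx : H x x = 0 by rewrite /H Hess /dcf /= !eqxx /= mulr0.
have Hyy : H y y = 0 by rewrite /H Hess /dcf /= !eqxx /= mulr0.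
have Hxy : H x y = c * p by rewrite /H Hess /dcf /= eqxx eq_sym ij.
have Hyx : H y x = c * p.
  rewrite /H Hess /dcf /= eqxx ij /= -/c; congr (_ * _).
  by apply: eq_bigl => m; rewrite andbC.
clearbody v H.
have S1 : \sum_a \sum_b v a * H a b * v b =
  (v x * H x x * v x + v x * H x y * v y) + (v y * H y x * v x + v y * H y y * v y).
  have E1 : \sum_a \sum_b v a * H a b * v b =
    \sum_b v x * H x b * v b + \sum_b v y * H y b * v b.
    apply: (@sum2 R _ x y (fun a => \sum_b v a * H a b * v b) xy) => z zx zy; apply: big1 => b _.
    by rewrite (v0 z zx zy) !mul0r.
  have E2 : \sum_b v x * H x b * v b = v x * H x x * v x + v x * H x y * v y.
    apply: (@sum2 R _ x y (fun b => v x * H x b * v b) xy) => z zx zy.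
    by rewrite (v0 z zx zy) mulr0.
  have E3 : \sum_b v y * H y b * v b = v y * H y x * v x + v y * H y y * v y.
    apply: (@sum2 R _ x y (fun b => v y * H y b * v b) xy) => z zx zy.
    by rewrite (v0 z zx zy) mulr0.
  by rewrite E1 E2 E3.
rewrite S1.
rewrite vx vy Hxx Hyy Hxy Hyx => Hle.
have : 0 < (c * p) * (c * p).
  by rewrite lt0r mulf_neq0 //= -expr2 sqr_ge0.
nra.
Qed.
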